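(* Let $\mathcal A$ be finite, $r:\mathcal A\to[0,1]$, $\eta>0$, and $\pi^{\mathrm{ref}}\in\Delta(\mathcal A)$ with $\pi^{\mathrm{ref}}(a)>0$ for all $a$. Let $\hat\pi\in\Delta(\mathcal A)$ be any distribution with $\mathrm{supp}(\hat\pi)=\mathcal A$. Then $$\mathrm{SubOpt}(\hat\pi)=\eta^{-1}\,\mathbb E_{a\sim\pi^{\mathrm{ref}}}\Big[\psi\Big(\frac{\hat\pi(a)}{\pi^*(a)}\Big)\Big],\qquad\text{where }\psi(x)=x-1-\log x.$$
   Context: $J(\pi)=\sum_ar(a)\pi(a)-\eta^{-1}\mathrm{KL}(\pi^{\mathrm{ref}}\|\pi)$ with $\mathrm{KL}(P\|Q)=\sum_aP(a)\log(P(a)/Q(a))$; $\pi^*$ is the unique maximizer of $J$ over $\Delta(\mathcal A)$; $\mathrm{SubOpt}(\pi)=J(\pi^* )-J(\pi)$. *)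

(* Defs.v *)
From HB Require Import structures.
From mathcomp Require Import all_boot all_order all_algebra.
From mathcomp Require Import all_classical all_reals all_analysis.
Set Implicit Arguments. Unset Strict Implicit. Unset Printing Implicit Defensive.
Import Order.TTheory GRing.Theory Num.Theory.
Local Open Scope ring_scope.

Definition is_dist (R : realType) (A : finType) (p : A -> R) : Prop :=
  (forall a, 0 <= p a) /\ \sum_(a : A) p a = 1.

Definition KL (R : realType) (A : finType) (P Q : A -> R) : \bar R :=
  (\sum_(a : A)
     (if P a == 0%R then 0%E
      else if Q a == 0%R then +oo%E
      else (P a * ln (P a / Q a))%:E))%E.

Definition J (R : realType) (A : finType) (r : A -> R) (eta : R)
    (pref p : A -> R) : \bar R :=
  ((\sum_(a : A) r a * p a)%:E - (eta^-1)%:E * KL pref p)%E.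

Definition SubOpt (R : realType) (A : finType) (r : A -> R) (eta : R)
    (pref pistar p : A -> R) : \bar R :=
  (J r eta pref pistar - J r eta pref p)%E.

Definition psi (R : realType) (x : R) : R := x - 1 - ln x.

(* Main.v *)
Require Import Defs.
From HB Require Import structures.
From mathcomp Require Import all_boot all_order all_algebra.
From mathcomp Require Import all_classical all_reals all_analysis.
From mathcomp Require Import ring lra.
Import Order.TTheory GRing.Theory Num.Theory.
Local Open Scope ring_scope.

Section H.
Variable R : realType.
Variable A : finType.

Lemma KLfin (P Q : A -> R) : (forall a, 0 < P a) -> (forall a, 0 < Q a) ->
  KL P Q = (\sum_a P a * ln (P a / Q a))%:E.
Proof.
move=> HP HQ; rewrite /KL -sumEFin; apply: eq_bigr => a _.
by rewrite (gt_eqF (HP a)) (gt_eqF (HQ a)).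
Qed.

Lemma Jfin (r : A -> R) eta (P Q : A -> R) : (forall a, 0 < P a) -> (forall a, 0 < Q a) ->
  J r eta P Q = ((\sum_a r a * Q a) - eta^-1 * \sum_a P a * ln (P a / Q a))%:E.
Proof. by move=> HP HQ; rewrite /J KLfin //= -EFinM -EFinB. Qed.

Lemma dist_le1 (p : A -> R) a : is_dist p -> p a <= 1.
Proof.
case=> H0 H1; rewrite -H1 (bigD1 a) //= lerDl.
by apply: sumr_ge0 => i _.
Qed.

Lemma ln_diff (x y : R) : 0 < x -> 0 < y -> 1 - x / y <= ln y - ln x.
Proof.
move=> hx hy.
have h : -1 < x / y - 1 by rewrite ltrBrDr addrC subrr divr_gt0.
have := le_ln1Dx h; rewrite addrC subrK ln_div ?posrE //.
lra.
Qed.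

Lemma term (p x y v t m : R) : 0 < m -> m <= x -> m / 2 <= y -> y = x + t * v ->
  v ^+ 2 <= 1 -> 0 <= p ->
  p * (t * v) / x - 2 * p * t ^+ 2 / m ^+ 2 <= p * (1 - x / y).
Proof.
move=> hm hmx hmy hy hv hp.
have hx : 0 < x by exact: lt_le_trans hm hmx.
have hy0 : 0 < y by apply: lt_le_trans hmy; rewrite divr_gt0.
have tv : t * v = y - x by rewrite hy; ring.
have yn : y != 0 by rewrite gt_eqF.
have xn : x != 0 by rewrite gt_eqF.
have e1 : p * (1 - x / y) = p * (t * v) / y.
  by rewrite tv; field.
rewrite e1.
have e2 : p * (t * v) / x - p * (t * v) / y = p * t^+2 * v^+2 / (x * y).
  have vv : t^+2 * v^+2 = (y - x)^+2 by rewrite -tv exprMn.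
  rewrite -[p * t^+2 * v^+2]mulrA vv tv; field; by apply/andP.
suff : p * t^+2 * v^+2 / (x * y) <= 2 * p * t ^+ 2 / m ^+ 2 by lra.
have hxy0 : 0 < x * y by rewrite mulr_gt0.
rewrite ler_pdivrMr //.
have -> : 2 * p * t ^+ 2 / m ^+ 2 * (x * y) = (2 * p * t ^+ 2 * (x * y)) / m ^+ 2.
  by rewrite mulrAC.
rewrite ler_pdivlMr ?exprn_gt0 //.
have hxy : m ^+ 2 <= 2 * (x * y).
  have : m / 2 * m <= y * x by apply: ler_pM => //; [rewrite divr_ge0 // ltW| exact: ltW].
  lra.
have hpt : 0 <= p * t ^+ 2 by rewrite mulr_ge0 // sqr_ge0.
have h1 : p * t ^+ 2 * v ^+ 2 <= p * t ^+ 2 by rewrite ler_piMr.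
have h2 : p * t ^+ 2 * m ^+ 2 <= p * t ^+ 2 * (2 * (x * y)) by rewrite ler_wpM2l.
have h3 : p * t ^+ 2 * v ^+ 2 * m ^+ 2 <= p * t ^+ 2 * m ^+ 2.
  by rewrite ler_wpM2r ?sqr_ge0.
apply: le_trans h3 _; apply: le_trans h2 _; rewrite le_eqVlt; apply/orP; left; apply/eqP; ring.
Qed.

Lemma zero_of (g C d : R) : 0 < C -> 0 < d ->
  (forall t, t != 0 -> `|t| <= d -> t * g <= C * t ^+ 2) -> g = 0.
Proof.
move=> hC hd H.
case: (ltgtP g 0) => // hg; exfalso.
- set t := Num.min d (- g / (2 * C)).
  have ht : 0 < t by rewrite lt_min hd /= divr_gt0 ?mulr_gt0 // oppr_gt0.
  have := H (- t) _ _.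
  rewrite oppr_eq0 gt_eqF // normrN gtr0_norm // ge_min lexx => /(_ isT isT).
  have ht2 : t <= - g / (2 * C) by rewrite ge_min lexx orbT.
  have : C * t <= - g / 2.
    have -> : - g / 2 = C * (- g / (2 * C)) by field; rewrite gt_eqF.
    by rewrite ler_wpM2l // ltW.
  move=> h1 h2.
  have : - t * g <= C * t * t by rewrite -mulrA -expr2 sqrrN in h2 *.
  nra.
- set t := Num.min d (g / (2 * C)).
  have ht : 0 < t by rewrite lt_min hd /= divr_gt0 ?mulr_gt0.
  have := H t _ _.
  rewrite gt_eqF // gtr0_norm // ge_min lexx => /(_ isT isT).
  have ht2 : t <= g / (2 * C) by rewrite ge_min lexx orbT.
  have : C * t <= g / 2.
    have -> : g / 2 = C * (g / (2 * C)) by field; rewrite gt_eqF.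
    by rewrite ler_wpM2l // ltW.
  move=> h1 h2.
  have : t * g <= C * t * t by rewrite -mulrA -expr2.
  nra.
Qed.

End H.
Arguments dist_le1 {R A p} a _.
Arguments term {R} p x y v t m.
Arguments zero_of {R} g C d.

Theorem lemmaE1 (R : realType) (A : finType) (r : A -> R) (eta : R)
    (pref pistar pihat : A -> R) :
  (forall a, 0 <= r a <= 1) ->
  0 < eta ->
  is_dist pref -> (forall a, 0 < pref a) ->
  (* p* is the unique maximizer of J over Delta(A) *)
  is_dist pistar ->
  (forall p, is_dist p -> (J r eta pref p <= J r eta pref pistar)%E) ->
  (forall p, is_dist p ->
     (forall q', is_dist q' -> (J r eta pref q' <= J r eta pref p)%E) ->
     p = pistar) ->
  (* pihat in Delta(A) with full support *)
  is_dist pihat -> (forall a, pihat a != 0) ->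
  SubOpt r eta pref pistar pihat =
    ((eta^-1 * \sum_(a : A) pref a * psi (pihat a / pistar a))%:E)%E.
Proof.
move=> hr heta [pr0 pr1] prpos hst Hmax Huniq [ph0 ph1] phnz.
have phpos : forall a, 0 < pihat a by move=> a; rewrite lt_def phnz ph0.
have hei : 0 < eta^-1 by rewrite invr_gt0.
case: (hst) => s0 s1.
have stpos : forall a, 0 < pistar a.
  move=> a; rewrite lt_def s0 andbT; apply/negP => /eqP h0.
  have := Hmax pref (conj pr0 pr1).
  have hK : KL pref pistar = +oo%E.
    apply/esum_eqyP.
      by move=> i _; case: ifP => // _; case: ifP.
    exists a; split => //.
    by rewrite (gt_eqF (prpos a)) h0 eqxx.
  rewrite [X in (_ <= X)%E]/J hK mulry gtr0_sg // mul1e /=.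
  by rewrite leeNy_eq Jfin.
set m := \prod_a pistar a.
have hm : 0 < m by apply: prodr_gt0 => a _.
have hmx : forall a, m <= pistar a.
  move=> a; rewrite /m (bigD1 a) //=; apply: ler_piMr; first exact: ltW.
  by apply: prodr_ile1 => i _; rewrite s0 /= (dist_le1 i hst).
set v := fun a => pihat a - pistar a.
have hv : forall a, v a ^+ 2 <= 1.
  move=> a; have h1 := dist_le1 a hst; have h2 := dist_le1 a (conj ph0 ph1).
  have := s0 a; have := ph0 a; rewrite /v; nra.
have hsv : \sum_a v a = 0 by rewrite /v sumrB ph1 s1 subrr.
set S := \sum_a pref a * v a / pistar a.
set G0 := \sum_a r a * v a + eta^-1 * S.
have key : forall t, t != 0 -> `|t| <= m / 2 -> t * G0 <= (2 / (eta * m ^+ 2)) * t ^+ 2.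
  move=> t t0 tm.
  set p := fun a => pistar a + t * v a.
  have hy : forall a, m / 2 <= p a.
    move=> a.
    have : `|t * v a| <= m / 2.
      rewrite normrM; apply: le_trans tm; rewrite ler_piMr //.
      have h1 := dist_le1 a hst; have h2 := dist_le1 a (conj ph0 ph1).
      have := s0 a; have := ph0 a; rewrite ler_norml /v => ??; apply/andP; split; lra.
    rewrite ler_norml => /andP [h1 h2]; have := hmx a; rewrite /p; lra.
  have ppos : forall a, 0 < p a.
    by move=> a; apply: lt_le_trans (hy a); rewrite divr_gt0.
  have hp : is_dist p.
    split; first by move=> a; exact: ltW.
    by rewrite /p big_split /= -mulr_sumr hsv mulr0 addr0.
  have := Hmax p hp; rewrite !Jfin // lee_fin.
  have e1 : \sum_a r a * p a = \sum_a r a * pistar a + t * \sum_a r a * v a.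
    rewrite mulr_sumr -big_split; apply: eq_bigr => a _ /=; rewrite /p; ring.
  set L := \sum_a pref a * (ln (p a) - ln (pistar a)).
  have e2 : \sum_a pref a * ln (pref a / pistar a) - \sum_a pref a * ln (pref a / p a) = L.
    rewrite -sumrB; apply: eq_bigr => a _.
    rewrite !ln_div ?posrE //; ring.
  have Lb : t * S - 2 * t ^+ 2 / m ^+ 2 <= L.
    have -> : t * S - 2 * t ^+ 2 / m ^+ 2 =
       \sum_a (pref a * (t * v a) / pistar a - 2 * pref a * t ^+ 2 / m ^+ 2).
      rewrite sumrB; congr (_ - _).
        by rewrite /S mulr_sumr; apply: eq_bigr => a _; ring.
      by rewrite -[LHS]mul1r -pr1 mulr_suml; apply: eq_bigr => a _; ring.
    apply: ler_sum => a _.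
    apply: le_trans (term _ _ _ _ _ _ hm (hmx a) (hy a) _ (hv a) (ltW (prpos a))) _ => //.
    rewrite ler_wpM2l ?(ltW (prpos a)) //; apply: ln_diff => //.
  rewrite e1 => H.
  have H' : t * \sum_a r a * v a + eta^-1 * L <= 0 by rewrite -e2; lra.
  have H2 : eta^-1 * (t * S - 2 * t ^+ 2 / m ^+ 2) <= eta^-1 * L.
    by rewrite ler_wpM2l // ltW.
  have -> : 2 / (eta * m ^+ 2) * t ^+ 2 = eta^-1 * (2 * t ^+ 2 / m ^+ 2).
    by rewrite invfM; ring.
  rewrite /G0; lra.
have G00 : G0 = 0.
  apply: (@zero_of _ G0 (2 / (eta * m ^+ 2)) (m / 2)) => //.
    by rewrite divr_gt0 // mulr_gt0 // exprn_gt0.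
  by rewrite divr_gt0.
rewrite /SubOpt !Jfin // -EFinB; congr EFin.
have e1 : forall q, (forall a, 0 < q a) -> \sum_a pref a * ln (pref a / q a)
   = \sum_a pref a * ln (pref a) - \sum_a pref a * ln (q a).
  move=> q hq; rewrite -sumrB; apply: eq_bigr => a _; rewrite ln_div ?posrE //; ring.
have e3 : \sum_a pref a * psi (pihat a / pistar a) =
   \sum_a pref a * pihat a / pistar a - 1 -
   (\sum_a pref a * ln (pihat a) - \sum_a pref a * ln (pistar a)).
  rewrite -pr1 -!sumrB; apply: eq_bigr => a _; rewrite /psi ln_div ?posrE //.
  by ring.
have e4 : \sum_a r a * v a = \sum_a r a * pihat a - \sum_a r a * pistar a.
  by rewrite -sumrB; apply: eq_bigr => a _; rewrite /v; ring.
have e5 : S = \sum_a pref a * pihat a / pistar a - 1.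
  rewrite /S -pr1 -sumrB; apply: eq_bigr => a _; rewrite /v.
  by field; rewrite gt_eqF.
rewrite e1 // e1 // e3.
move: G00; rewrite /G0 e4 e5 => G00.
lra.
Qed.
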